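(* Let $K\ge 1$, $c>0$, $P_{\max}>0$, and for $k,k'\in\{1,\dots,K\}$ let $a_{k,k'}\ge 0$, $d_k\ge 0$, $n_k>0$ with $a_{k,k}\ge d_k$, and $\gamma_k\ge 0$. Define on $[0,\infty)^K$ $$f_k(\mathbf{P})=\log_2\Big(\sum_{k'}a_{k,k'}P_{k'}+n_k\Big),\quad g_k(\mathbf{P})=\log_2\Big(\sum_{k'}a_{k,k'}P_{k'}-d_kP_k+n_k\Big),$$ and for a fixed $\mathbf P^{(n)}\in[0,\infty)^K$ the first-order Taylor expansions $$\hat f_k(\mathbf{P},\mathbf{P}^{(n)})=f_k(\mathbf{P}^{(n)})+\frac{\sum_{k'}a_{k,k'}(P_{k'}-P^{(n)}_{k'})}{\ln 2\,(\sum_{k'}a_{k,k'}P^{(n)}_{k'}+n_k)},$$ $$\hat g_k(\mathbf{P},\mathbf{P}^{(n)})=g_k(\mathbf{P}^{(n)})+\frac{\sum_{k'}a_{k,k'}(P_{k'}-P^{(n)}_{k'})-d_k(P_k-P^{(n)}_k)}{\ln 2\,(\sum_{k'}a_{k,k'}P^{(n)}_{k'}-d_kP^{(n)}_k+n_k)},$$ $\hat R_k(\mathbf P,\mathbf P^{(n)})=c(\hat f_k(\mathbf P,\mathbf P^{(n)})-g_k(\mathbf P))$, $\overline R_k(\mathbf P,\mathbf P^{(n)})=c(f_k(\mathbf P)-\hat g_k(\mathbf P,\mathbf P^{(n)}))$, and $P_{\mathrm N}(\mathbf P,x)=C_0+\sum_k\Delta_kP_k+\sum_k\beta_kx_k$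 with $C_0>0$, $\Delta_k\ge 1$, $\beta_k>0$. Consider the problem $$\mathcal P_l':\ \max_{\mathbf P}\ \frac{\sum_k\overline R_k(\mathbf P,\mathbf P^{(n)})}{P_{\mathrm N}(\mathbf P,(\hat R_k(\mathbf P,\mathbf P^{(n)}))_k)}\quad\text{s.t. } 0\le P_k\le P_{\max},\ \ \gamma_k\Big(\sum_{k'}a_{k,k'}P_{k'}+n_k\Big)-(1+\gamma_k)d_kP_k\le 0\ \ \forall k.$$ Then $\mathcal P_l'$ satisfies the standard concave-convex fractional programming (CCFP) formulation.
   Context: Model: uplink network with $K$ users, $P_k$ transmit power of user $k$; $c=\tau_uB/(\tau_u+\tau_p)$, $a_{k,k'}=\mathbb{E}\{|\mathrm{IS}_{k,k'}|^2\}$, $d_k=|\mathbb{E}\{\mathrm{DS}_k\}|^2$, $n_k$ effective noise power; $c(f_k-g_k)$ is the rate of user $k$; $P_{\mathrm N}$ is the total network power consumption, affine in the user rates with positive coefficients; the second constraint family is the QoS (minimum rate) constraint with $\gamma_k=2^{\tau_cR_{k,\min}/(\tau_uB)}-1$. A maximization problem $\max_{\mathbf P\in\mathcal X} A(\mathbf P)/B(\mathbf P)$ is a concave-convex fractional program (CCFP) if the numerator $A$ is concave, the denominator $B$ is convex and nonnegative (positive) on the feasible set, and the feasible set $\mathcal X$ is convex. *)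

(* Defs.v *)
From mathcomp Require Import all_boot all_order all_algebra.
From mathcomp Require Import all_classical all_reals all_analysis.
Set Implicit Arguments. Unset Strict Implicit. Unset Printing Implicit Defensive.
Import Order.TTheory GRing.Theory Num.Theory.
Local Open Scope ring_scope.

Section Defs.
Variable R : realType.
Variable K : nat.

Definition vec := 'I_K -> R.

Definition vcomb (t : R) (x y : vec) : vec := fun i => t * x i + (1 - t) * y i.

Definition convex_set (S : vec -> Prop) : Prop :=
  forall x y t, S x -> S y -> 0 <= t <= 1 -> S (vcomb t x y).

Definition concave_on (S : vec -> Prop) (F : vec -> R) : Prop :=
  forall x y t, S x -> S y -> 0 <= t <= 1 ->
    t * F x + (1 - t) * F y <= F (vcomb t x y).

Definition convex_on (S : vec -> Prop) (F : vec -> R) : Prop :=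
  forall x y t, S x -> S y -> 0 <= t <= 1 ->
    F (vcomb t x y) <= t * F x + (1 - t) * F y.

(* max_{P in S} A P / B P is a concave-convex fractional program *)
Definition CCFP (S : vec -> Prop) (A B : vec -> R) : Prop :=
  [/\ convex_set S, concave_on S A, convex_on S B & forall P, S P -> 0 < B P].

Definition log2 (x : R) : R := ln x / ln 2.

Variables (a : 'I_K -> 'I_K -> R) (d nn : 'I_K -> R).

Definition interf (k : 'I_K) (P : vec) : R := \sum_(k' < K) a k k' * P k'.

Definition f_ (k : 'I_K) (P : vec) : R := log2 (interf k P + nn k).
Definition g_ (k : 'I_K) (P : vec) : R := log2 (interf k P - d k * P k + nn k).

Definition fhat (k : 'I_K) (P Pn : vec) : R :=
  f_ k Pn + (\sum_(k' < K) a k k' * (P k' - Pn k')) /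
            (ln 2 * (interf k Pn + nn k)).

Definition ghat (k : 'I_K) (P Pn : vec) : R :=
  g_ k Pn + ((\sum_(k' < K) a k k' * (P k' - Pn k')) - d k * (P k - Pn k)) /
            (ln 2 * (interf k Pn - d k * Pn k + nn k)).

Definition Rhat (c : R) (k : 'I_K) (P Pn : vec) : R := c * (fhat k P Pn - g_ k P).
Definition Rbar (c : R) (k : 'I_K) (P Pn : vec) : R := c * (f_ k P - ghat k P Pn).

Definition PN (C0 : R) (Delta beta : 'I_K -> R) (P x : vec) : R :=
  C0 + \sum_(k < K) Delta k * P k + \sum_(k < K) beta k * x k.

Definition feasible (Pmax : R) (gamma : 'I_K -> R) (P : vec) : Prop :=
  forall k, [/\ 0 <= P k, P k <= Pmax &
     gamma k * (interf k P + nn k) - (1 + gamma k) * d k * P k <= 0].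
End Defs.

(* Main.v *)
Require Import Defs.
From mathcomp Require Import all_boot all_order all_algebra.
From mathcomp Require Import all_classical all_reals all_analysis.
From mathcomp Require Import ring lra.
Import Order.TTheory GRing.Theory Num.Theory.
Local Open Scope ring_scope.

Lemma ln_conc (R : realType) (t u v : R) : 0 <= t <= 1 -> 0 < u -> 0 < v ->
  t * ln u + (1 - t) * ln v <= ln (t * u + (1 - t) * v).
Proof.
move=> /andP[t0 t1] u0 v0.
have := @concave_ln R (Itv01 t0 t1) u v u0 v0.
by rewrite /conv /=.
Qed.

Lemma ln_tangent (R : realType) (u w : R) : 0 < u -> 0 < w ->
  ln u <= ln w + (u - w) / w.
Proof.
move=> u0 w0.
have h : -1 < u / w - 1 by have := divr_gt0 u0 w0; lra.
have := le_ln1Dx h.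
rewrite addrC subrK ln_div ?posrE //.
have -> : (u - w) / w = u / w - 1 by rewrite mulrBl divff ?gt_eqF.
lra.
Qed.

Lemma log2_conc (R : realType) (t u v : R) : 0 <= t <= 1 -> 0 < u -> 0 < v ->
  t * log2 u + (1 - t) * log2 v <= log2 (t * u + (1 - t) * v).
Proof.
move=> ht u0 v0; rewrite /log2.
have L0 : 0 < ln (2:R) by apply: ln_gt0; lra.
have -> : t * (ln u / ln 2) + (1 - t) * (ln v / ln 2)
  = (t * ln u + (1 - t) * ln v) / ln 2 by rewrite /=; ring.
apply: ler_wpM2r; first by rewrite invr_ge0 ltW.
exact: ln_conc.
Qed.

Set Implicit Arguments.
Section S.
Variables (R : realType) (K : nat) (a : 'I_K -> 'I_K -> R) (d nn : 'I_K -> R).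

Lemma interf_comb k t (x y : vec R K) :
  interf a k (vcomb t x y) = t * interf a k x + (1 - t) * interf a k y.
Proof.
rewrite /interf /vcomb !mulr_sumr -big_split; apply: eq_bigr => i _ /=; ring.
Qed.

Lemma sum_diff k (P Q : vec R K) :
  \sum_(k' < K) a k k' * (P k' - Q k') = interf a k P - interf a k Q.
Proof.
rewrite /interf -sumrB; apply: eq_bigr => i _; ring.
Qed.

Lemma interf_ge k (P : vec R K) : (forall k k', 0 <= a k k') ->
  (forall k, 0 <= P k) -> a k k * P k <= interf a k P.
Proof.
move=> ha hP; rewrite /interf (bigD1 k) //= lerDl sumr_ge0 // => i _.
exact: mulr_ge0.
Qed.

End S.

Theorem lemma5 (R : realType) (K : nat) (hK : (1 <= K)%N)
  (c Pmax C0 : R) (a : 'I_K -> 'I_K -> R) (d nn gamma Delta beta : 'I_K -> R)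
  (Pn : 'I_K -> R)
  (hc : 0 < c) (hPmax : 0 < Pmax) (hC0 : 0 < C0)
  (ha : forall k k', 0 <= a k k') (hd : forall k, 0 <= d k)
  (hn : forall k, 0 < nn k) (hakk : forall k, d k <= a k k)
  (hgamma : forall k, 0 <= gamma k) (hDelta : forall k, 1 <= Delta k)
  (hbeta : forall k, 0 < beta k) (hPn : forall k, 0 <= Pn k) :
  CCFP (feasible a d nn Pmax gamma)
    (fun P => \sum_(k < K) Rbar a d nn c k P Pn)
    (fun P => PN C0 Delta beta P (fun k => Rhat a d nn c k P Pn)).
Proof.
have L0 : 0 < ln (2:R) by apply: ln_gt0; lra.
have nonneg : forall P, feasible a d nn Pmax gamma P -> forall k, 0 <= P k.
  by move=> P hP k; have [] := hP k.
have posf : forall P, feasible a d nn Pmax gamma P -> forall k,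
    0 < interf a k P + nn k.
  move=> P hP k; have := interf_ge a k P ha (nonneg P hP).
  have := mulr_ge0 (ha k k) (nonneg P hP k); have := hn k; lra.
have posg : forall P, feasible a d nn Pmax gamma P -> forall k,
    0 < interf a k P - d k * P k + nn k.
  move=> P hP k; have := interf_ge a k P ha (nonneg P hP).
  have := ler_wpM2r (nonneg P hP k) (hakk k); have := hn k; lra.
have fconc : forall x y t, feasible a d nn Pmax gamma x ->
    feasible a d nn Pmax gamma y -> 0 <= t <= 1 -> forall k,
    t * f_ a nn k x + (1 - t) * f_ a nn k y <= f_ a nn k (vcomb t x y).
  move=> x y t hx hy ht k; rewrite /f_ interf_comb.
  have -> : t * interf a k x + (1 - t) * interf a k y + nn k =
     t * (interf a k x + nn k) + (1 - t) * (interf a k y + nn k) by ring.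
  by apply: log2_conc => //; apply: posf.
have gconc : forall x y t, feasible a d nn Pmax gamma x ->
    feasible a d nn Pmax gamma y -> 0 <= t <= 1 -> forall k,
    t * g_ a d nn k x + (1 - t) * g_ a d nn k y <= g_ a d nn k (vcomb t x y).
  move=> x y t hx hy ht k; rewrite /g_ interf_comb /vcomb.
  have -> : t * interf a k x + (1 - t) * interf a k y
       - d k * (t * x k + (1 - t) * y k) + nn k =
     t * (interf a k x - d k * x k + nn k)
     + (1 - t) * (interf a k y - d k * y k + nn k) by ring.
  by apply: log2_conc => //; apply: posg.
have fhat_aff : forall x y t k, fhat a nn k (vcomb t x y) Pn =
    t * fhat a nn k x Pn + (1 - t) * fhat a nn k y Pn.
  move=> x y t k; rewrite /fhat !sum_diff interf_comb; ring.
have ghat_aff : forall x y t k, ghat a d nn k (vcomb t x y) Pn =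
    t * ghat a d nn k x Pn + (1 - t) * ghat a d nn k y Pn.
  move=> x y t k; rewrite /ghat !sum_diff interf_comb /vcomb; ring.
split.
- move=> x y t hx hy ht k.
  have [x0 x1 x2] := hx k; have [y0 y1 y2] := hy k.
  move: ht => /andP[t0 t1].
  rewrite /vcomb interf_comb; split; nra.
- move=> x y t hx hy ht.
  rewrite !mulr_sumr -big_split ler_sum // => k _.
  rewrite /Rbar ghat_aff; have := fconc x y t hx hy ht k.
  set F := f_ a nn k (vcomb t x y); move=> h.
  rewrite -subr_ge0.
  have -> : c * (F - (t * ghat a d nn k x Pn + (1 - t) * ghat a d nn k y Pn)) -
    (t * (c * (f_ a nn k x - ghat a d nn k x Pn)) +
     (1 - t) * (c * (f_ a nn k y - ghat a d nn k y Pn))) =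
    c * (F - (t * f_ a nn k x + (1 - t) * f_ a nn k y)) by ring.
  by apply: mulr_ge0; [exact: ltW | rewrite subr_ge0].
- move=> x y t hx hy ht; rewrite /PN.
  have E1 : \sum_(k < K) Delta k * vcomb t x y k =
     t * \sum_(k < K) Delta k * x k + (1 - t) * \sum_(k < K) Delta k * y k.
    rewrite !mulr_sumr -big_split; apply: eq_bigr => k _; rewrite /vcomb /=; ring.
  have E2 : \sum_(k < K) beta k * Rhat a d nn c k (vcomb t x y) Pn <=
     t * \sum_(k < K) beta k * Rhat a d nn c k x Pn
     + (1 - t) * \sum_(k < K) beta k * Rhat a d nn c k y Pn.
    rewrite !mulr_sumr -big_split ler_sum // => k _.
    rewrite /Rhat fhat_aff; have := gconc x y t hx hy ht k.
    set G := g_ a d nn k (vcomb t x y); move=> h.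
    rewrite -subr_ge0.
    have -> : t * (beta k * (c * (fhat a nn k x Pn - g_ a d nn k x)))
      + (1 - t) * (beta k * (c * (fhat a nn k y Pn - g_ a d nn k y)))
      - beta k * (c * (t * fhat a nn k x Pn + (1 - t) * fhat a nn k y Pn - G))
      = beta k * c * (G - (t * g_ a d nn k x + (1 - t) * g_ a d nn k y)) by ring.
    apply: mulr_ge0; last by rewrite subr_ge0.
    by apply: mulr_ge0; apply: ltW.
  move: E1 E2; set A1 := \sum_(k < K) _; set A2 := \sum_(k < K) _;
    set A3 := \sum_(k < K) _; set B1 := \sum_(k < K) _;
    set B2 := \sum_(k < K) _; set B3 := \sum_(k < K) _.
  move=> E1 E2; rewrite E1; lra.
- move=> P hP; rewrite /PN.
  have S1 : 0 <= \sum_(k < K) Delta k * P k.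
    apply: sumr_ge0 => k _; apply: mulr_ge0; last exact: nonneg.
    by have := hDelta k; lra.
  have S2 : 0 <= \sum_(k < K) beta k * Rhat a d nn c k P Pn.
    apply: sumr_ge0 => k _; apply: mulr_ge0; first exact: ltW.
    apply: mulr_ge0; first exact: ltW.
    rewrite subr_ge0.
    have gf : g_ a d nn k P <= f_ a nn k P.
      rewrite /g_ /f_ /log2; apply: ler_wpM2r; first by rewrite invr_ge0 ltW.
      rewrite ler_ln ?posrE; [| exact: posg | exact: posf].
      have := mulr_ge0 (hd k) (nonneg P hP k); lra.
    apply: le_trans gf _.
    have hPnf : feasible a d nn Pmax gamma Pn -> True by [].
    have w0 : 0 < interf a k Pn + nn k.
      have := interf_ge a k Pn ha hPn.
      have := mulr_ge0 (ha k k) (hPn k); have := hn k; lra.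
    rewrite /fhat /f_ sum_diff /log2.
    have := @ln_tangent R _ _ (posf P hP k) w0.
    set u := interf a k P + nn k; set w := interf a k Pn + nn k.
    move=> h.
    have -> : (interf a k P - interf a k Pn) / (ln 2 * w) = (u - w) / w / ln 2.
      rewrite /u /w; field; apply/andP; split; rewrite gt_eqF //.
    have -> : ln w / ln 2 + (u - w) / w / ln 2 = (ln w + (u - w) / w) / ln 2 by ring.
    by apply: ler_wpM2r; first by rewrite invr_ge0 ltW.
  lra.
Qed.
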